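(* Let $A$ be a partially ordered set and let $G,H$ be passable games over $A$. Then: (a) $G\le_{c,1} H$ if and only if $G\le H$; (b) $G\le_{c,2} H$ if and only if $G\le H$; (c) $G\le_{c,3} H$ if and only if $G\lhd H$.
   Context: Games over a poset $A$ are defined inductively: for each $a\in A$ there is an atomic game $[a]$, which has no options; and if $L$ and $R$ are non-empty sets of games, then $\{L\mid R\}$ is a composite game with left options $L$ and right options $R$. The relations $\le$ and $\lhd$ are defined by simultaneous recursion: $G\le H$ iff (1) every left option $G^L$ of $G$ satisfies $G^L\lhd H$, (2) every right option $H^R$ of $H$ satisfies $G\lhd H^R$, and (3) if $G$ or $H$ is atomic then $G\lhd H$; and $G\lhd H$ iff (1) some right option $G^R$ of $G$ satisfies $G^R\le H$, or (2) some left option $H^L$ of $H$ satisfies $G\le H^L$, or (3) $G=[a]$, $H=[b]$ are atomic and $a\le b$. A game is passable if $G\lhd G$ and recursively all its options are passable. Sum: for $G$ over $A$ and $K$ over $B$, $G+K$ is the game over $A\times B$ (componentwise order) with $[a]+[b]=[(a,b)]$ and otherwise $G+K=\{G^L+K,G+K^L\mid G^R+K,G+K^R\}$. Map: for a monotone $f:C\to D$ and a game $X$ over $C$, $f(X)$ is the game over $D$ with $f([c])=[f(c)]$ and $f(\{X^L\mid X^R\})=\{f(X^L)\mid f(X^R)\}$; write $G+_fK=f(G+K)$. Let $\mathbb{B}=\{\bot<\top\}$. For a game $X$ over $\mathbb{B}$ (play: players alternate moving to an option of the current position, Left choosing left options and Right right options, until an atomic position is reached; Left wins iff it is $[\top]$),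 Left has a first-player winning strategy in $X$ iff $X=[\top]$, or $X$ is composite and some left option of $X$ is one in which Left has a second-player winning strategy; Left has a second-player winning strategy in $X$ iff $X=[\top]$, or $X$ is composite and Left has a first-player winning strategy in every right option of $X$. A context for $A$ is a triple $(B,f,K)$ with $B$ a poset, $f:A\times B\to\mathbb{B}$ monotone, and $K$ a passable game over $B$. For passable $G,H$ over $A$: $G\le_{c,1}H$ if for all contexts $(B,f,K)$, if Left has a first-player winning strategy in $G+_fK$ then Left has one in $H+_fK$; $G\le_{c,2}H$ if for all contexts, if Left has a second-player winning strategy in $G+_fK$ then Left has one in $H+_fK$; $G\le_{c,3}H$ if for all contexts, if Left has a second-player winning strategy in $G+_fK$ then Left has a first-player winning strategy in $H+_fK$. *)

(* Defs.v *)
Set Implicit Arguments.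

Record poset := Poset {
  carrier :> Type;
  ple : carrier -> carrier -> Prop;
  ple_refl : forall x, ple x x;
  ple_antisym : forall x y, ple x y -> ple y x -> x = y;
  ple_trans : forall x y z, ple x y -> ple y z -> ple x z }.

Definition monotone (P Q : poset) (f : P -> Q) : Prop :=
  forall x y, ple P x y -> ple Q (f x) (f y).
Arguments monotone {P Q} f.

Definition prod_le (A B : poset) (x y : A * B) : Prop :=
  ple A (fst x) (fst y) /\ ple B (snd x) (snd y).

Lemma prod_le_refl (A B : poset) x : prod_le A B x x.
Proof. split; apply ple_refl. Qed.
Lemma prod_le_antisym (A B : poset) x y :
  prod_le A B x y -> prod_le A B y x -> x = y.
Proof.
  destruct x, y; intros [H1 H2] [H3 H4]; simpl in *.
  f_equal; eapply ple_antisym; eauto.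
Qed.
Lemma prod_le_trans (A B : poset) x y z :
  prod_le A B x y -> prod_le A B y z -> prod_le A B x z.
Proof. intros [H1 H2] [H3 H4]; split; eapply ple_trans; eauto. Qed.

Definition prodP (A B : poset) : poset :=
  @Poset (A * B) (prod_le A B) (@prod_le_refl A B)
    (@prod_le_antisym A B) (@prod_le_trans A B).

(** The two-element poset B = {bot < top}, with bot = false, top = true. *)
Definition bool_le (x y : bool) : Prop := x = false \/ y = true.
Lemma bool_le_refl x : bool_le x x.
Proof. destruct x; [right|left]; reflexivity. Qed.
Lemma bool_le_antisym x y : bool_le x y -> bool_le y x -> x = y.
Proof. unfold bool_le; destruct x, y; intuition congruence. Qed.
Lemma bool_le_trans x y z : bool_le x y -> bool_le y z -> bool_le x z.
Proof. unfold bool_le; destruct x, y, z; intuition congruence. Qed.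
Definition boolP : poset :=
  @Poset bool bool_le bool_le_refl bool_le_antisym bool_le_trans.

(** Games over (the carrier of) a poset: an atom [a], or a composite game
    {L | R} whose non-empty sets of left/right options are given as
    families indexed by (inhabited) types. *)
Inductive game (A : Type) : Type :=
| Atom : A -> game A
| Comp : forall (Ix Jx : Type), inhabited Ix -> inhabited Jx ->
         (Ix -> game A) -> (Jx -> game A) -> game A.
Arguments Atom {A} _.
Arguments Comp {A} Ix Jx _ _ _ _.

Definition is_atom {A : Type} (G : game A) : Prop :=
  match G with Atom _ => True | Comp _ _ _ _ _ _ => False end.

Fixpoint game_rel {A : poset} (G : game A) : game A -> Prop * Prop :=
  fix relH (H : game A) : Prop * Prop :=
    let lf :=
      (match G with
       | Comp _ Jx _ _ _ r => exists j : Jx, fst (game_rel (r j) H)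
       | Atom _ => False end)
      \/ (match H with
          | Comp Ix _ _ _ l _ => exists i : Ix, fst (relH (l i))
          | Atom _ => False end)
      \/ (match G, H with
          | Atom a, Atom b => ple A a b
          | _, _ => False end) in
    let le :=
      (match G with
       | Comp Ix _ _ _ l _ => forall i : Ix, snd (game_rel (l i) H)
       | Atom _ => True end)
      /\ (match H with
          | Comp _ Jx _ _ _ r => forall j : Jx, snd (relH (r j))
          | Atom _ => True end)
      /\ ((is_atom G \/ is_atom H) -> lf) in
    (le, lf).

Definition game_le {A : poset} (G H : game A) : Prop := fst (game_rel G H).
Definition game_lf {A : poset} (G H : game A) : Prop := snd (game_rel G H).

Fixpoint passable {A : poset} (G : game A) : Prop :=
  game_lf G G /\
  match G with
  | Atom _ => True
  | Comp Ix Jx _ _ l r => (forall i : Ix, passable (l i)) /\ (forall j : Jx, passable (r j))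
  end.

Definition inh_inl {Ix Ix' : Type} (h : inhabited Ix) : inhabited (Ix + Ix') :=
  match h with inhabits i => inhabits (inl i) end.

Fixpoint gsum {A B : Type} (G : game A) : game B -> game (A * B) :=
  fix gsumK (K : game B) : game (A * B) :=
    match G, K with
    | Atom a, Atom b => Atom (a, b)
    | Atom _, Comp Ix Jx hI hJ l r =>
        Comp Ix Jx hI hJ (fun i => gsumK (l i)) (fun j => gsumK (r j))
    | Comp Ix Jx hI hJ l r, Atom _ =>
        Comp Ix Jx hI hJ (fun i => gsum (l i) K) (fun j => gsum (r j) K)
    | Comp Ix Jx hI hJ l r, Comp Ix' Jx' _ _ l' r' =>
        Comp (Ix + Ix') (Jx + Jx') (inh_inl hI) (inh_inl hJ)
          (fun s => match s with inl i => gsum (l i) K | inr i' => gsumK (l' i') end)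
          (fun s => match s with inl j => gsum (r j) K | inr j' => gsumK (r' j') end)
    end.

Fixpoint gmap {C D : Type} (f : C -> D) (X : game C) : game D :=
  match X with
  | Atom c => Atom (f c)
  | Comp Ix Jx hI hJ l r => Comp Ix Jx hI hJ (fun i => gmap f (l i)) (fun j => gmap f (r j))
  end.

Fixpoint lwin (X : game bool) : Prop * Prop :=
  match X with
  | Atom b => (b = true, b = true)
  | Comp Ix Jx _ _ l r =>
      ((exists i : Ix, snd (lwin (l i))), (forall j : Jx, fst (lwin (r j))))
  end.

Definition left_wins_first (X : game bool) : Prop := fst (lwin X).
Definition left_wins_second (X : game bool) : Prop := snd (lwin X).

Definition sum_via {A B : poset} (f : prodP A B -> boolP) (G : game A) (K : game B)
  : game bool := gmap f (gsum G K).

Definition le_c1 {A : poset} (G H : game A) : Prop :=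
  forall (B : poset) (f : prodP A B -> boolP) (K : game B),
    monotone f -> passable K ->
    left_wins_first (sum_via f G K) -> left_wins_first (sum_via f H K).

Definition le_c2 {A : poset} (G H : game A) : Prop :=
  forall (B : poset) (f : prodP A B -> boolP) (K : game B),
    monotone f -> passable K ->
    left_wins_second (sum_via f G K) -> left_wins_second (sum_via f H K).

Definition le_c3 {A : poset} (G H : game A) : Prop :=
  forall (B : poset) (f : prodP A B -> boolP) (K : game B),
    monotone f -> passable K ->
    left_wins_second (sum_via f G K) -> left_wins_first (sum_via f H K).

(* Main.v *)
Require Import Defs.
From Stdlib Require Import ClassicalEpsilon.

Definition lopt {T} (X G : game T) : Prop :=
  match G with Atom _ => False | Comp _ _ _ _ l _ => exists i, X = l i end.
Definition ropt {T} (X G : game T) : Prop :=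
  match G with Atom _ => False | Comp _ _ _ _ _ r => exists j, X = r j end.
Definition sub {T} (X G : game T) : Prop := lopt X G \/ ropt X G.

Lemma sub_wf T : well_founded (@sub T).
Proof.
  intro G; induction G as [a|Ix Jx hI hJ l IHl r IHr]; constructor;
    intros y [Hy|Hy]; simpl in Hy; try contradiction;
    destruct Hy as [i ->]; auto.
Qed.

Arguments sub_wf {T} _.

Lemma le_unfold {A : poset} (G H : game A) : game_le G H <->
 (match G with Comp Ix _ _ _ l _ => forall i, game_lf (l i) H | Atom _ => True end)
 /\ (match H with Comp _ Jx _ _ _ r => forall j, game_lf G (r j) | Atom _ => True end)
 /\ ((is_atom G \/ is_atom H) -> game_lf G H).
Proof. destruct G, H; apply iff_refl. Qed.

Lemma lf_unfold {A : poset} (G H : game A) : game_lf G H <->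
 (match G with Comp _ Jx _ _ _ r => exists j, game_le (r j) H | Atom _ => False end)
 \/ (match H with Comp Ix _ _ _ l _ => exists i, game_le G (l i) | Atom _ => False end)
 \/ (match G, H with Atom a, Atom b => ple A a b | _, _ => False end).
Proof. destruct G, H; apply iff_refl. Qed.

Lemma le_char {A : poset} (G H : game A) :
  game_le G H <-> (forall X, lopt X G -> game_lf X H) /\
                  (forall Y, ropt Y H -> game_lf G Y) /\
                  (is_atom G \/ is_atom H -> game_lf G H).
Proof.
  rewrite le_unfold.
  destruct G as [a|Ix Jx hI hJ l r]; destruct H as [b|Ix' Jx' hI' hJ' l' r']; simpl;
  (split; intros [H1 [H2 H3]]; (split; [|split]); try exact H3;
   first [ exact I | intros X HX; simpl in HX; (contradiction || (destruct HX as [i ->]; apply H1))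
         | intros i; apply H1; exists i; reflexivity
         | intros X HX; simpl in HX; (contradiction || (destruct HX as [i ->]; apply H2))
         | intros i; apply H2; exists i; reflexivity ]).
Qed.

Lemma lf_char {A : poset} (G H : game A) :
  game_lf G H <-> (exists X, ropt X G /\ game_le X H) \/
                  (exists Y, lopt Y H /\ game_le G Y) \/
                  (exists a b, G = Atom a /\ H = Atom b /\ ple A a b).
Proof.
  rewrite lf_unfold.
  destruct G as [a|Ix Jx hI hJ l r]; destruct H as [b|Ix' Jx' hI' hJ' l' r']; simpl;
  (split; [ firstorder (subst; eauto)
          | intros [[X [HX HX2]]|[[Y [HY HY2]]|[a0 [b0 [E1 [E2 Hab]]]]]];
            [ left | right; left | right; right ];
            first [ contradiction | discriminate
                  | destruct HX as [j ->]; eauto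
                  | destruct HY as [j ->]; eauto
                  | injection E1; injection E2; intros; subst; auto ] ]).
Qed.

Lemma passable_char {A : poset} (G : game A) :
  passable G <-> game_lf G G /\ (forall X, sub X G -> passable X).
Proof.
  destruct G as [a|Ix Jx hI hJ l r]; simpl; unfold sub; simpl;
  firstorder (subst; eauto).
Qed.
Section Basic.
Context {A : poset}.
Implicit Types G H K X Y : game A.

Lemma lf_of_ropt {G H X} : ropt X G -> game_le X H -> game_lf G H.
Proof. intros; apply lf_char; left; eauto. Qed.
Lemma lf_of_lopt {G H Y} : lopt Y H -> game_le G Y -> game_lf G H.
Proof. intros; apply lf_char; right; left; eauto. Qed.
Lemma lf_atoms {a b : A} : ple A a b -> game_lf (Atom a) (Atom b).
Proof. intros; apply lf_char; right; right; eauto. Qed.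
Lemma le_lopt {G H X} : game_le G H -> lopt X G -> game_lf X H.
Proof. intros h; apply le_char in h; apply h. Qed.
Lemma le_ropt {G H Y} : game_le G H -> ropt Y H -> game_lf G Y.
Proof. intros h; apply le_char in h; apply h. Qed.
Lemma le_atom {G H} : game_le G H -> is_atom G \/ is_atom H -> game_lf G H.
Proof. intros h; apply le_char in h; apply h. Qed.
Lemma atom_le {a b : A} : ple A a b -> game_le (Atom a) (Atom b).
Proof.
  intros h; apply le_char; repeat split; simpl; try contradiction.
  intros _; apply lf_atoms; auto.
Qed.

Lemma le_refl G : game_le G G.
Proof.
  induction (sub_wf G) as [G _ IH].
  apply le_char; repeat split.
  - intros X HX; apply (lf_of_lopt (Y:=X)); auto. apply IH; left; auto.
  - intros Y HY; apply (lf_of_ropt (X:=Y)); auto. apply IH; right; auto.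
  - intros [h|h]; destruct G; try contradiction; apply lf_atoms; apply ple_refl.
Qed.

Lemma trans_all : forall G H K,
  (game_le G H -> game_le H K -> game_le G K) /\
  (game_lf G H -> game_le H K -> game_lf G K) /\
  (game_le G H -> game_lf H K -> game_lf G K).
Proof.
  intros G; induction (sub_wf G) as [G _ IHG]; intros H;
  induction (sub_wf H) as [H _ IHH]; intros K; induction (sub_wf K) as [K _ IHK].
  assert (T2 : game_lf G H -> game_le H K -> game_lf G K).
  { intros h1 h2.
    apply lf_char in h1 as [[X [HX HX2]]|[[Y [HY HY2]]|[a [b [-> [-> hab]]]]]].
    - apply (lf_of_ropt (X:=X)); auto. apply (proj1 (IHG X (or_intror HX) H K)); auto.
    - apply (proj2 (proj2 (IHH Y (or_introl HY) K))); auto. eapply le_lopt; eauto.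
    - pose proof (le_atom h2 (or_introl I)) as h3.
      apply lf_char in h3 as [[X [[] _]]|[[Y [HY HY2]]|[b' [c [E1 [-> hbc]]]]]].
      + apply (lf_of_lopt (Y:=Y)); auto.
        apply (proj1 (IHK Y (or_introl HY))); auto. apply atom_le; auto.
      + injection E1 as ->. apply lf_atoms; eapply ple_trans; eauto. }
  assert (T3 : game_le G H -> game_lf H K -> game_lf G K).
  { intros h1 h2.
    apply lf_char in h2 as [[X [HX HX2]]|[[Y [HY HY2]]|[b [c [-> [-> hbc]]]]]].
    - apply (proj1 (proj2 (IHH X (or_intror HX) K))); auto. eapply le_ropt; eauto.
    - apply (lf_of_lopt (Y:=Y)); auto. apply (proj1 (IHK Y (or_introl HY))); auto.
    - pose proof (le_atom h1 (or_intror I)) as h3.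
      apply lf_char in h3 as [[X [HX HX2]]|[[Y [[] _]]|[a [b' [-> [E1 hab]]]]]].
      + apply (lf_of_ropt (X:=X)); auto.
        apply (proj1 (IHG X (or_intror HX) (Atom b) (Atom c))); auto. apply atom_le; auto.
      + injection E1 as ->. apply lf_atoms; eapply ple_trans; eauto. }
  split; [|split; assumption].
  intros h1 h2. apply le_char; repeat split.
  - intros X HX. apply (proj1 (proj2 (IHG X (or_introl HX) H K))); auto.
    eapply le_lopt; eauto.
  - intros Y HY. apply (proj2 (proj2 (IHK Y (or_intror HY)))); auto.
    eapply le_ropt; eauto.
  - intros [h|h].
    + apply T2; auto. apply le_atom; auto.
    + apply T3; auto. apply le_atom; auto.
Qed.

Lemma le_trans {G H K} : game_le G H -> game_le H K -> game_le G K.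
Proof. apply trans_all. Qed.
Lemma lf_le_trans {G H K} : game_lf G H -> game_le H K -> game_lf G K.
Proof. apply trans_all. Qed.
Lemma le_lf_trans {G H K} : game_le G H -> game_lf H K -> game_lf G K.
Proof. apply trans_all. Qed.

End Basic.

Lemma pass_sub {T : poset} {G X : game T} : passable G -> sub X G -> passable X.
Proof. intros h; apply passable_char in h; apply h. Qed.
Lemma pass_lf {T : poset} {G : game T} : passable G -> game_lf G G.
Proof. intros h; apply passable_char in h; apply h. Qed.

Section Sum.
Context {A B : Type}.

Ltac gsum_opt_tac :=
  first [ solve [intros [[? [[] _]]|[? [[] _]]]]
        | intros []; fail
        | intros [i ->]; right; eexists; split; [exists i|]; reflexivity
        | intros [i ->]; left; eexists; split; [exists i|]; reflexivity
        | intros [[? [[] _]]|[? [[i ->] ->]]]; exists i; reflexivity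
        | intros [[? [[i ->] ->]]|[? [[] _]]]; exists i; reflexivity
        | intros [[i|i] ->]; [left|right]; eexists; (split; [exists i|]); reflexivity
        | intros [[? [[i ->] ->]]|[? [[i' ->] ->]]]; [exists (inl i)|exists (inr i')]; reflexivity ].

Lemma gsum_lopt (G : game A) (K : game B) X :
  lopt X (gsum G K) <-> (exists G', lopt G' G /\ X = gsum G' K) \/
                        (exists K', lopt K' K /\ X = gsum G K').
Proof.
  destruct G as [a|Ix Jx hI hJ l r]; destruct K as [b|Ix' Jx' hI' hJ' l' r']; simpl;
  split; gsum_opt_tac.
Qed.

Lemma gsum_ropt (G : game A) (K : game B) X :
  ropt X (gsum G K) <-> (exists G', ropt G' G /\ X = gsum G' K) \/
                        (exists K', ropt K' K /\ X = gsum G K').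
Proof.
  destruct G as [a|Ix Jx hI hJ l r]; destruct K as [b|Ix' Jx' hI' hJ' l' r']; simpl;
  split; gsum_opt_tac.
Qed.

Lemma gsum_is_atom (G : game A) (K : game B) :
  is_atom (gsum G K) -> is_atom G /\ is_atom K.
Proof. destruct G, K; simpl; tauto. Qed.

End Sum.

Section SumOrder.
Context {A B : poset}.

Lemma sum_all : forall (G H : game A) (K K' : game B),
  passable G -> passable H -> passable K -> passable K' ->
  (game_le G H -> game_le K K' -> @game_le (prodP A B) (gsum G K) (gsum H K')) /\
  ((game_lf G H /\ game_le K K') \/ (game_le G H /\ game_lf K K') ->
     @game_lf (prodP A B) (gsum G K) (gsum H K')).
Proof.
  intros G; induction (sub_wf G) as [G _ IHG]; intros H;
  induction (sub_wf H) as [H _ IHH]; intros K; induction (sub_wf K) as [K _ IHK];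
  intros K'; induction (sub_wf K') as [K' _ IHK']; intros pG pH pK pK'.
  assert (V : (game_lf G H /\ game_le K K') \/ (game_le G H /\ game_lf K K') ->
     @game_lf (prodP A B) (gsum G K) (gsum H K')).
  { intros [[h1 h2]|[h1 h2]].
    - apply lf_char in h1 as [[X [HX HX2]]|[[Y [HY HY2]]|[a [b [-> [-> hab]]]]]].
      + apply (lf_of_ropt (A:=prodP A B) (X := gsum X K)). apply gsum_ropt; left; eauto.
        apply (IHG X (or_intror HX) H K K' (pass_sub pG (or_intror HX)) pH pK pK'); auto.
      + apply (lf_of_lopt (A:=prodP A B) (Y := gsum Y K')). apply gsum_lopt; left; eauto.
        apply (IHH Y (or_introl HY) K K' pG (pass_sub pH (or_introl HY)) pK pK'); auto.
      + pose proof (lf_le_trans (pass_lf pK) h2) as h3.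
        apply lf_char in h3 as [[X [HX HX2]]|[[Y [HY HY2]]|[c [c' [-> [-> hcc]]]]]].
        * apply (lf_of_ropt (A:=prodP A B) (X := gsum (Atom a) X)). apply gsum_ropt; right; eauto.
          apply (IHK X (or_intror HX) K' pG pH (pass_sub pK (or_intror HX)) pK'); auto.
          apply atom_le; auto.
        * apply (lf_of_lopt (A:=prodP A B) (Y := gsum (Atom b) Y)). apply gsum_lopt; right; eauto.
          apply (IHK' Y (or_introl HY) pG pH pK (pass_sub pK' (or_introl HY))); auto.
          apply atom_le; auto.
        * simpl. apply lf_atoms. split; simpl; auto.
    - apply lf_char in h2 as [[X [HX HX2]]|[[Y [HY HY2]]|[c [c' [-> [-> hcc]]]]]].
      + apply (lf_of_ropt (A:=prodP A B) (X := gsum G X)). apply gsum_ropt; right; eauto.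
        apply (IHK X (or_intror HX) K' pG pH (pass_sub pK (or_intror HX)) pK'); auto.
      + apply (lf_of_lopt (A:=prodP A B) (Y := gsum H Y)). apply gsum_lopt; right; eauto.
        apply (IHK' Y (or_introl HY) pG pH pK (pass_sub pK' (or_introl HY))); auto.
      + pose proof (lf_le_trans (pass_lf pG) h1) as h3.
        apply lf_char in h3 as [[X [HX HX2]]|[[Y [HY HY2]]|[a [b [-> [-> hab]]]]]].
        * apply (lf_of_ropt (A:=prodP A B) (X := gsum X (Atom c))). apply gsum_ropt; left; eauto.
          apply (IHG X (or_intror HX) H (Atom c) (Atom c') (pass_sub pG (or_intror HX)) pH pK pK'); auto.
          apply atom_le; auto.
        * apply (lf_of_lopt (A:=prodP A B) (Y := gsum Y (Atom c'))). apply gsum_lopt; left; eauto.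
          apply (IHH Y (or_introl HY) (Atom c) (Atom c') pG (pass_sub pH (or_introl HY)) pK pK'); auto.
          apply atom_le; auto.
        * simpl. apply lf_atoms. split; simpl; auto. }
  split; [|exact V].
  intros h1 h2. apply le_char; repeat split.
  - intros X HX. apply gsum_lopt in HX as [[G' [HG' ->]]|[K'' [HK'' ->]]].
    + apply (IHG G' (or_introl HG') H K K' (pass_sub pG (or_introl HG')) pH pK pK').
      left; split; auto. exact (le_lopt h1 HG').
    + apply (IHK K'' (or_introl HK'') K' pG pH (pass_sub pK (or_introl HK'')) pK').
      right; split; auto. exact (le_lopt h2 HK'').
  - intros Y HY. apply gsum_ropt in HY as [[H' [HH' ->]]|[K'' [HK'' ->]]].
    + apply (IHH H' (or_intror HH') K K' pG (pass_sub pH (or_intror HH')) pK pK').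
      left; split; auto. exact (le_ropt h1 HH').
    + apply (IHK' K'' (or_intror HK'') pG pH pK (pass_sub pK' (or_intror HK''))).
      right; split; auto. exact (le_ropt h2 HK'').
  - intros [h|h]; apply V; left; split; auto; apply le_atom; auto;
      apply gsum_is_atom in h; tauto.
Qed.

End SumOrder.

Section Map.
Context {C D : Type} (f : C -> D).

Lemma gmap_lopt (G : game C) X :
  lopt X (gmap f G) <-> exists G', lopt G' G /\ X = gmap f G'.
Proof.
  destruct G as [a|Ix Jx hI hJ l r]; simpl; split.
  - intros [].
  - intros [? [[] _]].
  - intros [i ->]; eexists; split; [exists i|]; reflexivity.
  - intros [? [[i ->] ->]]; exists i; reflexivity.
Qed.
Lemma gmap_ropt (G : game C) X :
  ropt X (gmap f G) <-> exists G', ropt G' G /\ X = gmap f G'.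
Proof.
  destruct G as [a|Ix Jx hI hJ l r]; simpl; split.
  - intros [].
  - intros [? [[] _]].
  - intros [i ->]; eexists; split; [exists i|]; reflexivity.
  - intros [? [[i ->] ->]]; exists i; reflexivity.
Qed.
Lemma gmap_is_atom (G : game C) : is_atom (gmap f G) -> is_atom G.
Proof. destruct G; simpl; auto. Qed.
End Map.

Section MapOrder.
Context {C D : poset} (f : C -> D) (mf : monotone f).

Lemma map_all : forall X Y : game C,
  (game_le X Y -> game_le (gmap f X) (gmap f Y)) /\
  (game_lf X Y -> game_lf (gmap f X) (gmap f Y)).
Proof.
  intros X; induction (sub_wf X) as [X _ IHX]; intros Y;
  induction (sub_wf Y) as [Y _ IHY].
  assert (V : game_lf X Y -> game_lf (gmap f X) (gmap f Y)).
  { intros h. apply lf_char in h as [[X' [HX HX2]]|[[Y' [HY HY2]]|[a [b [-> [-> hab]]]]]].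
    - apply (lf_of_ropt (X := gmap f X')). apply gmap_ropt; eauto.
      apply (IHX X' (or_intror HX) Y); auto.
    - apply (lf_of_lopt (Y := gmap f Y')). apply gmap_lopt; eauto.
      apply (IHY Y' (or_introl HY)); auto.
    - simpl; apply lf_atoms; apply mf; auto. }
  split; [|exact V].
  intros h. apply le_char; repeat split.
  - intros Z HZ. apply gmap_lopt in HZ as [X' [HX' ->]].
    apply (IHX X' (or_introl HX') Y). exact (le_lopt h HX').
  - intros Z HZ. apply gmap_ropt in HZ as [Y' [HY' ->]].
    apply (IHY Y' (or_intror HY')). exact (le_ropt h HY').
  - intros hh; apply V; apply le_atom; auto.
    destruct hh as [hh|hh]; apply gmap_is_atom in hh; auto.
Qed.

Lemma map_passable (X : game C) : passable X -> passable (gmap f X).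
Proof.
  induction (sub_wf X) as [X _ IH]; intros pX.
  apply passable_char; split.
  - apply map_all; apply (pass_lf pX).
  - intros Z [HZ|HZ]; [apply gmap_lopt in HZ as [X' [HX' ->]]|apply gmap_ropt in HZ as [X' [HX' ->]]].
    + apply IH; [left; auto| exact (pass_sub pX (or_introl HX'))].
    + apply IH; [right; auto| exact (pass_sub pX (or_intror HX'))].
Qed.
End MapOrder.

Definition LF (X : game bool) := left_wins_first X.
Definition LS (X : game bool) := left_wins_second X.

Lemma LF_opt {X Y} : lopt Y X -> LS Y -> LF X.
Proof. destruct X as [b|Ix Jx hI hJ l r]; simpl; [intros []|]. intros [i ->] h; exists i; exact h. Qed.
Lemma LF_elim X : LF X -> X = Atom true \/ exists Y, lopt Y X /\ LS Y.
Proof.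
  destruct X as [b|Ix Jx hI hJ l r]; unfold LF, left_wins_first; simpl.
  - intros ->; auto.
  - intros [i h]; right; exists (l i); split; [exists i; reflexivity| exact h].
Qed.
Lemma LS_elim {X Y} : LS X -> ropt Y X -> LF Y.
Proof. destruct X as [b|Ix Jx hI hJ l r]; simpl; [intros _ []|]. intros h [j ->]; apply h. Qed.
Lemma LS_intro X : ~ is_atom X -> (forall Y, ropt Y X -> LF Y) -> LS X.
Proof.
  destruct X as [b|Ix Jx hI hJ l r]; simpl; [tauto|]. intros _ h j; apply h; exists j; reflexivity.
Qed.
Lemma LS_atom {X} : is_atom X -> LS X -> LF X.
Proof. destruct X; simpl; tauto. Qed.

Lemma outcome_all : forall X Y : game boolP,
  (game_le X Y -> (LS X -> LS Y) /\ (LF X -> LF Y)) /\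
  (game_lf X Y -> LS X -> LF Y).
Proof.
  intros X; induction (sub_wf X) as [X _ IHX]; intros Y;
  induction (sub_wf Y) as [Y _ IHY].
  assert (V : game_lf X Y -> LS X -> LF Y).
  { intros h hs. apply lf_char in h as [[X' [HX HX2]]|[[Y' [HY HY2]]|[a [b [-> [-> hab]]]]]].
    - apply (proj2 (proj1 (IHX X' (or_intror HX) Y) HX2)). exact (LS_elim hs HX).
    - apply (LF_opt HY). apply (proj1 (proj1 (IHY Y' (or_introl HY)) HY2)); auto.
    - unfold LS, LF, left_wins_first, left_wins_second in *; simpl in *.
      destruct hab as [-> | ->]; congruence. }
  split; [|exact V].
  intros h; split.
  - intros hs. destruct Y as [b|Ix Jx hI hJ l r].
    + change (LF (Atom b)). apply V; auto. apply (le_atom h); right; exact I.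
    + apply LS_intro; [simpl; tauto|]. intros Y' HY'.
      apply (IHY Y' (or_intror HY')); auto. exact (le_ropt h HY').
  - intros hf. apply LF_elim in hf as [->|[X' [HX' hs]]].
    + apply V; [apply le_atom; simpl; auto| reflexivity].
    + apply (IHX X' (or_introl HX') Y); auto. exact (le_lopt h HX').
Qed.

Lemma passable_LS_LF (X : game boolP) : passable X -> LS X -> LF X.
Proof.
  intros pX hs. pose proof (pass_lf pX) as h.
  apply lf_char in h as [[X' [HX HX2]]|[[Y' [HY HY2]]|[a [b [-> [_ hab]]]]]].
  - apply (proj2 (proj1 (outcome_all X' X) HX2)). exact (LS_elim hs HX).
  - apply (LF_opt HY). apply (proj1 (proj1 (outcome_all X Y') HY2)); auto.
  - exact hs.
Qed.

Lemma sum_passable {A B : poset} : forall (G : game A) (K : game B),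
  passable G -> passable K -> @passable (prodP A B) (gsum G K).
Proof.
  intros G; induction (sub_wf G) as [G _ IHG]; intros K;
  induction (sub_wf K) as [K _ IHK]; intros pG pK.
  apply passable_char; split.
  - apply (proj2 (sum_all G G K K pG pG pK pK)). left; split; [exact (pass_lf pG)| apply le_refl].
  - intros X [HX|HX];
    [apply gsum_lopt in HX as [[G' [HG' ->]]|[K' [HK' ->]]]
    |apply gsum_ropt in HX as [[G' [HG' ->]]|[K' [HK' ->]]]].
    + apply IHG; [left; auto| exact (pass_sub pG (or_introl HG')) | auto].
    + apply IHK; [left; auto| auto | exact (pass_sub pK (or_introl HK'))].
    + apply IHG; [right; auto| exact (pass_sub pG (or_intror HG')) | auto].
    + apply IHK; [right; auto| auto | exact (pass_sub pK (or_intror HK'))].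
Qed.

Section Via.
Context {A B : poset} (f : prodP A B -> boolP).
Lemma via_lopt (G : game A) (K : game B) X :
  lopt X (sum_via f G K) -> (exists G', lopt G' G /\ X = sum_via f G' K) \/
                            (exists K', lopt K' K /\ X = sum_via f G K').
Proof.
  unfold sum_via; intros h. apply gmap_lopt in h as [Y [HY ->]].
  apply gsum_lopt in HY as [[G' [HG' ->]]|[K' [HK' ->]]]; eauto.
Qed.
Lemma via_ropt (G : game A) (K : game B) X :
  ropt X (sum_via f G K) -> (exists G', ropt G' G /\ X = sum_via f G' K) \/
                            (exists K', ropt K' K /\ X = sum_via f G K').
Proof.
  unfold sum_via; intros h. apply gmap_ropt in h as [Y [HY ->]].
  apply gsum_ropt in HY as [[G' [HG' ->]]|[K' [HK' ->]]]; eauto.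
Qed.
Lemma via_lopt_l (G G' : game A) (K : game B) :
  lopt G' G -> lopt (sum_via f G' K) (sum_via f G K).
Proof. intros h; unfold sum_via; apply gmap_lopt; eexists; split; [apply gsum_lopt; left; eauto|reflexivity]. Qed.
Lemma via_lopt_r (G : game A) (K K' : game B) :
  lopt K' K -> lopt (sum_via f G K') (sum_via f G K).
Proof. intros h; unfold sum_via; apply gmap_lopt; eexists; split; [apply gsum_lopt; right; eauto|reflexivity]. Qed.
Lemma via_ropt_l (G G' : game A) (K : game B) :
  ropt G' G -> ropt (sum_via f G' K) (sum_via f G K).
Proof. intros h; unfold sum_via; apply gmap_ropt; eexists; split; [apply gsum_ropt; left; eauto|reflexivity]. Qed.
Lemma via_ropt_r (G : game A) (K K' : game B) :
  ropt K' K -> ropt (sum_via f G K') (sum_via f G K).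
Proof. intros h; unfold sum_via; apply gmap_ropt; eexists; split; [apply gsum_ropt; right; eauto|reflexivity]. Qed.
End Via.

Lemma via_passable {A B : poset} (f : prodP A B -> boolP) (G : game A) (K : game B) :
  monotone f -> passable G -> passable K -> @passable boolP (sum_via f G K).
Proof. intros mf pG pK. apply (map_passable f mf). apply sum_passable; auto. Qed.

Definition opt_le (A : poset) (x y : option A) : Prop :=
  match x, y with None, _ => True | Some _, None => False | Some a, Some b => ple A b a end.
Lemma opt_le_refl A x : opt_le A x x.
Proof. destruct x; simpl; auto using ple_refl. Qed.
Lemma opt_le_antisym A x y : opt_le A x y -> opt_le A y x -> x = y.
Proof. destruct x, y; simpl; try tauto. intros; f_equal; apply ple_antisym; auto. Qed.
Lemma opt_le_trans A x y z : opt_le A x y -> opt_le A y z -> opt_le A x z.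
Proof. destruct x, y, z; simpl; try tauto. intros; eapply ple_trans; eauto. Qed.
Definition optP (A : poset) : poset :=
  @Poset (option A) (opt_le A) (@opt_le_refl A) (@opt_le_antisym A) (@opt_le_trans A).

Fixpoint negg {A : Type} (G : game A) : game (option A) :=
  match G with
  | Atom a => Atom (Some a)
  | Comp Ix Jx hI hJ l r => Comp Jx Ix hJ hI (fun j => negg (r j)) (fun i => negg (l i))
  end.

Lemma negg_lopt {A : Type} (G : game A) X :
  lopt X (negg G) <-> exists G', ropt G' G /\ X = negg G'.
Proof.
  destruct G as [a|Ix Jx hI hJ l r]; simpl; split.
  - intros [].
  - intros [? [[] _]].
  - intros [i ->]; eexists; split; [exists i|]; reflexivity.
  - intros [? [[i ->] ->]]; exists i; reflexivity.
Qed.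
Lemma negg_ropt {A : Type} (G : game A) X :
  ropt X (negg G) <-> exists G', lopt G' G /\ X = negg G'.
Proof.
  destruct G as [a|Ix Jx hI hJ l r]; simpl; split.
  - intros [].
  - intros [? [[] _]].
  - intros [i ->]; eexists; split; [exists i|]; reflexivity.
  - intros [? [[i ->] ->]]; exists i; reflexivity.
Qed.
Lemma negg_is_atom {A : Type} (G : game A) : is_atom (negg G) -> is_atom G.
Proof. destruct G; simpl; auto. Qed.

Section Neg.
Context {A : poset}.

Lemma neg_all : forall X Y : game A,
  (game_le X Y -> @game_le (optP A) (negg Y) (negg X)) /\
  (game_lf X Y -> @game_lf (optP A) (negg Y) (negg X)).
Proof.
  intros X; induction (sub_wf X) as [X _ IHX]; intros Y;
  induction (sub_wf Y) as [Y _ IHY].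
  assert (V : game_lf X Y -> @game_lf (optP A) (negg Y) (negg X)).
  { intros h. apply lf_char in h as [[X' [HX HX2]]|[[Y' [HY HY2]]|[a [b [-> [-> hab]]]]]].
    - apply (lf_of_lopt (A:=optP A) (Y := negg X')). apply negg_lopt; eauto.
      apply (IHX X' (or_intror HX) Y); auto.
    - apply (lf_of_ropt (A:=optP A) (X := negg Y')). apply negg_ropt; eauto.
      apply (IHY Y' (or_introl HY)); auto.
    - simpl; apply (lf_atoms (A:=optP A)); simpl; auto. }
  split; [|exact V].
  intros h. apply le_char; repeat split.
  - intros Z HZ. apply negg_lopt in HZ as [Y' [HY' ->]].
    apply (IHY Y' (or_intror HY')). exact (le_ropt h HY').
  - intros Z HZ. apply negg_ropt in HZ as [X' [HX' ->]].
    apply (IHX X' (or_introl HX') Y). exact (le_lopt h HX').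
  - intros hh; apply V; apply (le_atom h).
    destruct hh as [hh|hh]; apply negg_is_atom in hh; auto.
Qed.

Lemma negg_passable (X : game A) : passable X -> @passable (optP A) (negg X).
Proof.
  induction (sub_wf X) as [X _ IH]; intros pX.
  apply passable_char; split.
  - apply neg_all; apply (pass_lf pX).
  - intros Z [HZ|HZ]; [apply negg_lopt in HZ as [X' [HX' ->]]|apply negg_ropt in HZ as [X' [HX' ->]]].
    + apply IH; [right; auto| exact (pass_sub pX (or_intror HX'))].
    + apply IH; [left; auto| exact (pass_sub pX (or_introl HX'))].
Qed.

Definition fctx : prodP A (optP A) -> boolP := fun p =>
  match snd p with
  | None => false
  | Some b => if excluded_middle_informative (ple A b (fst p)) then true else false
  end.

Lemma fctx_mono : monotone fctx.
Proof.
  intros [a x] [a' x'] [h1 h2]; simpl in *. unfold fctx; simpl.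
  destruct x as [b|], x' as [b'|]; simpl in h2; try contradiction.
  - destruct (excluded_middle_informative (ple A b a)), (excluded_middle_informative (ple A b' a'));
      simpl; unfold bool_le; auto.
    exfalso; apply n. eapply ple_trans; [exact h2|]. eapply ple_trans; eauto.
  - simpl; unfold bool_le; auto.
  - simpl; unfold bool_le; auto.
Qed.

Notation S := (sum_via fctx).

Lemma mirror : forall X : game A, LS (S X (negg X)).
Proof.
  intros X; induction (sub_wf X) as [X _ IH].
  destruct X as [a|Ix Jx hI hJ l r].
  - unfold LS, left_wins_second, sum_via, fctx; simpl.
    destruct (excluded_middle_informative (ple A a a)) as [_|n]; [reflexivity|].
    exfalso; apply n; apply ple_refl.
  - apply LS_intro; [simpl; tauto|].
    intros Y HY. apply via_ropt in HY as [[X' [HX' ->]]|[K' [HK' ->]]].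
    + apply (LF_opt (Y := S X' (negg X'))).
      * apply via_lopt_r. apply negg_lopt; eauto.
      * apply IH; right; auto.
    + apply negg_ropt in HK' as [X' [HX' ->]].
      apply (LF_opt (Y := S X' (negg X'))).
      * apply via_lopt_l; auto.
      * apply IH; left; auto.
Qed.

Lemma zero_ctx : forall X : game A,
  ~ LF (S X (Atom None)) /\ ~ LS (S X (Atom None)).
Proof.
  intros X; induction (sub_wf X) as [X _ IH].
  destruct X as [a|Ix Jx hI hJ l r].
  - unfold LS, LF, left_wins_second, left_wins_first, sum_via, fctx; simpl.
    split; intro; discriminate.
  - split.
    + intro h; apply LF_elim in h as [E|[Y [HY hs]]]; [discriminate|].
      apply via_lopt in HY as [[G' [HG' ->]]|[K' [[] _]]].
      exact (proj2 (IH G' (or_introl HG')) hs).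
    + intro h. destruct hJ as [j].
      apply (proj1 (IH (r j) (or_intror (ex_intro _ j eq_refl)))).
      apply (LS_elim h). apply via_ropt_l. exists j; reflexivity.
Qed.

Lemma bot_le : forall Y : game (optP A),
  @game_le (optP A) (Atom None) Y /\ @game_lf (optP A) (Atom None) Y.
Proof.
  intros Y; induction (sub_wf Y) as [Y _ IH].
  assert (V : @game_lf (optP A) (Atom None) Y).
  { destruct Y as [y|Ix Jx hI hJ l r].
    - apply lf_atoms; simpl; exact I.
    - destruct hI as [i]. apply (lf_of_lopt (Y := l i)); [exists i; reflexivity|].
      apply IH; left; exists i; reflexivity. }
  split; [|exact V].
  apply le_char; repeat split.
  - intros X [].
  - intros Y' HY'; apply IH; right; auto.
  - intros _; exact V.
Qed.

Lemma recognize : forall G H : game A, passable G -> passable H ->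
  (LS (S H (negg G)) -> game_le G H) /\ (LF (S H (negg G)) -> game_lf G H).
Proof.
  intros G; induction (sub_wf G) as [G _ IHG]; intros H;
  induction (sub_wf H) as [H _ IHH]; intros pG pH.
  assert (V : LF (S H (negg G)) -> game_lf G H).
  { intros h. apply LF_elim in h as [E|[Y [HY hs]]].
    - destruct G as [a|]; destruct H as [b|]; unfold sum_via in E; simpl in E; try discriminate.
      injection E as E. unfold fctx in E; simpl in E.
      destruct (excluded_middle_informative (ple A a b)); [apply lf_atoms; auto|discriminate].
    - apply via_lopt in HY as [[H' [HH' ->]]|[K' [HK' ->]]].
      + apply (lf_of_lopt (Y := H')); auto.
        apply (IHH H' (or_introl HH') pG (pass_sub pH (or_introl HH'))); auto.
      + apply negg_lopt in HK' as [G' [HG' ->]].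
        apply (lf_of_ropt (X := G')); auto.
        apply (IHG G' (or_intror HG') H (pass_sub pG (or_intror HG')) pH); auto. }
  split; [|exact V].
  intros h. apply le_char; repeat split.
  - intros X HX. apply (IHG X (or_introl HX) H (pass_sub pG (or_introl HX)) pH).
    apply (LS_elim h). apply via_ropt_r. apply negg_ropt; eauto.
  - intros Y HY. apply (IHH Y (or_intror HY) pG (pass_sub pH (or_intror HY))).
    apply (LS_elim h). apply via_ropt_l; auto.
  - intros _. apply V. apply passable_LS_LF; auto.
    apply via_passable; auto using fctx_mono, negg_passable.
Qed.

End Neg.

Lemma le_ctx {A B : poset} (f : prodP A B -> boolP) (G H : game A) (K : game B) :
  monotone f -> passable G -> passable H -> passable K -> game_le G H ->
  @game_le boolP (sum_via f G K) (sum_via f H K).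
Proof.
  intros mf pG pH pK h. apply (proj1 (map_all f mf _ _)).
  apply (proj1 (sum_all G H K K pG pH pK pK)); auto. apply le_refl.
Qed.

Lemma lf_ctx {A B : poset} (f : prodP A B -> boolP) (G H : game A) (K : game B) :
  monotone f -> passable G -> passable H -> passable K -> game_lf G H ->
  @game_lf boolP (sum_via f G K) (sum_via f H K).
Proof.
  intros mf pG pH pK h. apply (proj2 (map_all f mf _ _)).
  apply (proj2 (sum_all G H K K pG pH pK pK)); left; split; auto. apply le_refl.
Qed.

Theorem proposition9p3 (A : poset) (G H : game A) :
  passable G -> passable H ->
  (le_c1 G H <-> game_le G H) /\
  (le_c2 G H <-> game_le G H) /\
  (le_c3 G H <-> game_lf G H).
Proof.
  intros pG pH. split; [|split]; split.
  - intros hc.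
    set (Kc := Comp unit unit (inhabits tt) (inhabits tt) (fun _ => negg G)
                 (fun _ => @Atom (option A) None) : game (optP A)).
    assert (pKc : passable Kc).
    { apply passable_char; split.
      - apply (lf_of_ropt (A := optP A) (X := Atom None)); [exists tt; reflexivity|].
        apply bot_le.
      - intros X [[u ->]|[u ->]].
        + apply negg_passable; auto.
        + simpl; split; [apply (lf_atoms (A := optP A)); simpl; exact I| exact I]. }
    assert (h1 : LF (sum_via fctx G Kc)).
    { apply (LF_opt (Y := sum_via fctx G (negg G))).
      - apply via_lopt_r. exists tt; reflexivity.
      - apply mirror. }
    specialize (hc (optP A) fctx Kc fctx_mono pKc h1).
    apply LF_elim in hc as [E|[Y [HY hs]]].
    + destruct H; unfold sum_via in E; simpl in E; discriminate.
    + apply via_lopt in HY as [[H' [HH' ->]]|[K' [[u ->] ->]]].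
      * exfalso. apply (proj1 (zero_ctx H')).
        apply (LS_elim hs). apply via_ropt_r. exists tt; reflexivity.
      * apply (recognize G H pG pH); exact hs.
  - intros hle B f K mf pK h.
    exact (proj2 (proj1 (outcome_all _ _) (le_ctx f G H K mf pG pH pK hle)) h).
  - intros hc.
    apply (recognize G H pG pH).
    apply (hc (optP A) fctx (negg G) fctx_mono (negg_passable G pG)).
    apply mirror.
  - intros hle B f K mf pK h.
    exact (proj1 (proj1 (outcome_all _ _) (le_ctx f G H K mf pG pH pK hle)) h).
  - intros hc.
    apply (recognize G H pG pH).
    apply (hc (optP A) fctx (negg G) fctx_mono (negg_passable G pG)).
    apply mirror.
  - intros hlf B f K mf pK h.
    exact (proj2 (outcome_all _ _) (lf_ctx f G H K mf pG pH pK hlf) h).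
Qed.
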